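(* For every $n\geq 3$ and every prime power $q=p^h$, the minimum distance $d(C(PG(n,q))^\perp)$ equals $d(C(PG(2,q))^\perp)$.
   Context: $C(PG(m,q))$ is the $p$-ary code spanned over $\mathbb{F}_p$ by the incidence vectors of the hyperplanes of $PG(m,q)$, with coordinates indexed by points. For $m=2$ the hyperplanes are the lines. $C^\perp$ is the dual code with respect to the standard scalar product over $\mathbb{F}_p$. $d(\cdot)$ denotes minimum distance, i.e. minimum nonzero weight. *)

(* Defs.v *)
From HB Require Import structures.
From mathcomp Require Import all_boot all_order all_algebra.
Set Implicit Arguments. Unset Strict Implicit. Unset Printing Implicit Defensive.
Import GRing.Theory.
Local Open Scope ring_scope.

(* The projective space PG(m, F) over a finite field F (q = #|F|) is built
   on the vector space F^(m+1) = 'rV[F]_(m.+1). *)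

Definition is_point (F : finFieldType) (m : nat) (S : {set 'rV[F]_(m.+1)}) : bool :=
  [exists v : 'rV[F]_(m.+1), (v != 0) && (S == [set a *: v | a : F])].

Definition is_hyperplane (F : finFieldType) (m : nat) (S : {set 'rV[F]_(m.+1)}) : bool :=
  [exists u : 'rV[F]_(m.+1), (u != 0) && (S == [set x | (x *m u^T) == 0])].

Definition PGpoint (F : finFieldType) (m : nat) :=
  {S : {set 'rV[F]_(m.+1)} | is_point S}.
Definition PGhyperplane (F : finFieldType) (m : nat) :=
  {S : {set 'rV[F]_(m.+1)} | is_hyperplane S}.

Definition word (F : finFieldType) (m p : nat) := {ffun PGpoint F m -> 'F_p}.

Definition incvec (F : finFieldType) (m p : nat) (H : PGhyperplane F m) : word F m p :=
  [ffun P : PGpoint F m => if val P \subset val H then 1 else 0].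

Definition PGcode (F : finFieldType) (m p : nat) : {set word F m p} :=
  [set c : word F m p | [exists a : {ffun PGhyperplane F m -> 'F_p},
     c == [ffun P => \sum_(H : PGhyperplane F m) a H * incvec p H P]]].

Definition dotw (F : finFieldType) (m p : nat) (v w : word F m p) : 'F_p :=
  \sum_(P : PGpoint F m) v P * w P.

Definition PGdual (F : finFieldType) (m p : nat) : {set word F m p} :=
  [set v : word F m p | [forall c in PGcode F m p, dotw v c == 0]].

Definition wt (F : finFieldType) (m p : nat) (v : word F m p) : nat :=
  #|[set P | v P != 0]|.

(* minimum distance = minimum nonzero weight (convention: #points + 1 if
   the code has no nonzero word; never happens for the codes considered) *)
Definition mindist (F : finFieldType) (m p : nat) (S : {set word F m p}) : nat :=
  \big[minn/#|{: PGpoint F m}|.+1]_(c in S | c != 0) wt c.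

(* Main.v *)
Require Import Defs.
From HB Require Import structures.
From mathcomp Require Import all_boot all_order all_algebra all_field.
Set Implicit Arguments. Unset Strict Implicit. Unset Printing Implicit Defensive.
Import GRing.Theory.
Local Open Scope ring_scope.

Section Basics.
Variable F : finFieldType.
Variable p : nat.
Hypothesis pcharF : p \in [pchar F].

Lemma cardF0 : (#|F|%:R : 'F_p) = 0.
Proof.
have pr := pcharf_prime pcharF.
have := card_pprimeChar pcharF.
set n := logn _ _ => /= hc.
have -> : #|F| = (p ^ n)%N by exact: hc.
case: n hc => [|n] hc.
  exfalso; move: hc; rewrite expn0 => hc1.
  have : (0 : F) == 1 by apply/eqP; apply: (@card_le1_eqP _ [set: F]) => //; rewrite cardsT -hc1 ?leqnn ?inE //. 
  by rewrite eq_sym oner_eq0.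
by rewrite natrX pchar_Fp_0 // expr0n.
Qed.
End Basics.


Section Vec.
Variable F : finFieldType.

Definition dot k (x u : 'rV[F]_k) : F := \sum_j x 0 j * u 0 j.
Definition dropv k (i : 'I_k.+1) (x : 'rV[F]_k.+1) : 'rV[F]_k := \row_j x 0 (lift i j).
Definition insv k (i : 'I_k.+1) (y : 'rV[F]_k) (c : F) : 'rV[F]_k.+1 :=
  \row_j (if unlift i j is Some j' then y 0 j' else c).

Lemma insv_i k i (y : 'rV[F]_k) c : insv i y c 0 i = c.
Proof. by rewrite mxE unlift_none. Qed.

Lemma insv_lift k i (y : 'rV[F]_k) c j : insv i y c 0 (lift i j) = y 0 j.
Proof. by rewrite mxE liftK. Qed.

Lemma drop_ins k i (y : 'rV[F]_k) c : dropv i (insv i y c) = y.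
Proof. by apply/rowP => j; rewrite mxE insv_lift. Qed.

Lemma ins_drop k i (x : 'rV[F]_k.+1) : insv i (dropv i x) (x 0 i) = x.
Proof.
apply/rowP => j; rewrite mxE; case: unliftP => [j'|] ->; last by [].
by rewrite mxE.
Qed.

Lemma insvD k i (y y' : 'rV[F]_k) c c' : insv i y c + insv i y' c' = insv i (y + y') (c + c').
Proof. by apply/rowP => j; rewrite !mxE; case: unliftP => [j'|] _; rewrite ?mxE. Qed.

Lemma insvZ k i (y : 'rV[F]_k) c a : a *: insv i y c = insv i (a *: y) (a * c).
Proof. by apply/rowP => j; rewrite !mxE; case: unliftP => [j'|] _; rewrite ?mxE. Qed.

Lemma dropvD k i (x y : 'rV[F]_k.+1) : dropv i (x + y) = dropv i x + dropv i y.
Proof. by apply/rowP => j; rewrite !mxE. Qed.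

Lemma dropvZ k i (x : 'rV[F]_k.+1) a : dropv i (a *: x) = a *: dropv i x.
Proof. by apply/rowP => j; rewrite !mxE. Qed.

Lemma dot_split k i (x u : 'rV[F]_k.+1) :
  dot x u = x 0 i * u 0 i + dot (dropv i x) (dropv i u).
Proof. by rewrite /dot (bigD1_ord i) //=; congr (_ + _); apply: eq_bigr => j _; rewrite !mxE. Qed.

Lemma dot_ins k i (y u : 'rV[F]_k) c c' : dot (insv i y c) (insv i u c') = c * c' + dot y u.
Proof. by rewrite (dot_split i) !insv_i !drop_ins. Qed.

Lemma sum_ins (R : nmodType) k i (h : 'rV[F]_k.+1 -> R) :
  \sum_(x : 'rV[F]_k.+1) h x = \sum_(c : F) \sum_(y : 'rV[F]_k) h (insv i y c).
Proof.
rewrite pair_big /=.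
rewrite (reindex (fun cy : F * 'rV[F]_k => insv i cy.2 cy.1)) //=.
exists (fun x : 'rV[F]_k.+1 => (x 0 i, dropv i x)) => [[c y] _|x _] /=.
  by rewrite insv_i drop_ins.
by rewrite ins_drop.
Qed.

Lemma mxdot k (x u : 'rV[F]_k) : (x *m u^T == 0) = (dot x u == 0).
Proof.
have -> : dot x u = (x *m u^T) 0 0 by rewrite mxE; apply: eq_bigr => j _; rewrite mxE.
apply/eqP/eqP => [-> |h]; first by rewrite mxE.
by apply/rowP => j; rewrite ord1 h mxE.
Qed.

Lemma dotC k (x u : 'rV[F]_k) : dot x u = dot u x.
Proof. by apply: eq_bigr => j _; rewrite mulrC. Qed.

Lemma dotZl k (x u : 'rV[F]_k) a : dot (a *: x) u = a * dot x u.
Proof. by rewrite /dot mulr_sumr; apply: eq_bigr => j _; rewrite mxE mulrA. Qed.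

Lemma dotDl k (x y u : 'rV[F]_k) : dot (x + y) u = dot x u + dot y u.
Proof. by rewrite /dot -big_split; apply: eq_bigr => j _; rewrite mxE mulrDl. Qed.

Lemma dot0l k (u : 'rV[F]_k) : dot 0 u = 0.
Proof. by rewrite /dot big1 // => j _; rewrite mxE mul0r. Qed.

Variable p : nat.
Hypothesis pcharF : p \in [pchar F].

Lemma ker_nonzero k l (M : 'M[F]_(k, l)) : (l < k)%N ->
  exists2 w : 'rV[F]_k, w != 0 & w *m M == 0.
Proof.
move=> lk.
have : kermx M != 0.
  rewrite -mxrank_eq0 mxrank_ker subn_eq0 -ltnNge.
  exact: leq_ltn_trans (rank_leq_col M) lk.
move=> kz.
have [i ri] : exists i, row i (kermx M) != 0.
  apply/existsP; apply: contraR kz; rewrite negb_exists => /forallP h.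
  by apply/eqP/row_matrixP => i; rewrite row0; apply/eqP; move: (h i); rewrite negbK.
exists (row i (kermx M)) => //.
by rewrite -row_mul mulmx_ker row0.
Qed.

Lemma cardF_gt1 : (1 < #|F|)%N.
Proof.
rewrite (cardD1 0) (cardD1 1) !inE oner_eq0 /=.
by [].
Qed.

Lemma ker_card k l (M : 'M[F]_(k, l)) : (l < k)%N ->
  (#|[set x : 'rV[F]_k | x *m M == 0]|%:R : 'F_p) = 0.
Proof.
move=> lk; have [w wnz wM] := @ker_nonzero _ _ M lk.
have [j wj] : exists j, w 0 j != 0.
  apply/existsP; apply: contraR wnz; rewrite negb_exists => /forallP h.
  by apply/eqP/rowP => j; rewrite mxE; apply/eqP; move: (h j); rewrite negbK.
set V := [set x : 'rV[F]_k | x *m M == 0].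
set V0 := [set x in V | x 0 j == 0].
have -> : V = [set cy.2 + cy.1 *: w | cy in setX [set: F] V0].
  apply/setP => x; apply/idP/imsetP => [xV|].
    exists (x 0 j / w 0 j, x - (x 0 j / w 0 j) *: w); last by rewrite subrK.
    rewrite !inE /=; apply/andP; split.
      by rewrite mulmxBl -scalemxAl (eqP wM) scaler0 subr0; rewrite inE in xV.
    by rewrite !mxE divfK // subrr.
  move=> [[c y]] /setXP [_]; rewrite !inE => /andP [yM _] ->.
  by rewrite mulmxDl -scalemxAl (eqP wM) (eqP yM) scaler0 addr0.
rewrite card_in_imset; last first.
  move=> [c y] [c' y']; rewrite !inE /= => /andP [_ /eqP y0] /andP [_ /eqP y0'] e.
  have ec : c = c'.
    move/(congr1 (fun z : 'rV[F]_k => z 0 j)): e; rewrite !mxE y0 y0' !add0r.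
    by move/(mulIf wj).
  by move: e; rewrite ec => /addIr ->.
rewrite cardsX cardsT natrM cardF0 ?mul0r //.
Qed.
End Vec.


Section V3.
Variable F : finFieldType.
Variable p : nat.
Hypothesis pcharF : p \in [pchar F].

Definition Dv k (g : 'rV[F]_k -> 'F_p) :=
  forall u : 'rV[F]_k, u != 0 -> \sum_(x | dot x u == 0) g x = 0.
Definition Inv k (g : 'rV[F]_k -> 'F_p) :=
  (forall a x, a != 0 -> g (a *: x) = g x) /\ g 0 = 0.
Definition supp k (g : 'rV[F]_k -> 'F_p) := [set x | g x != 0].

Lemma card_dot0 k (x : 'rV[F]_k) : (1 < k)%N ->
  (#|[set u : 'rV[F]_k | dot u x == 0]|%:R : 'F_p) = 0.
Proof.
move=> k1; rewrite -(@ker_card F p pcharF k 1 x^T) //.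
by congr (_%:R); apply: eq_card => u; rewrite !inE mxdot.
Qed.

Lemma sum_all k (g : 'rV[F]_k -> 'F_p) : (1 < k)%N -> Inv g -> Dv g ->
  \sum_x g x = 0.
Proof.
move=> k1 [_ g0] D.
have : \sum_(u | u != 0) \sum_(x | dot x u == 0) g x = 0.
  by rewrite big1 // => u /D.
rewrite (exchange_big_dep xpredT) //=.
rewrite (eq_bigr (fun x => - g x)); last first.
  move=> x _; rewrite sumr_const.
  have [-> |xnz] := eqVneq x 0; first by rewrite g0 mul0rn oppr0.
  rewrite -mulr_natr.
  have -> : #|[pred u : 'rV[F]_k | (u != 0) && (dot x u == 0)]| =
            #|[set u : 'rV[F]_k | dot u x == 0]|.-1.
    rewrite [in RHS](cardD1 0) !inE dot0l eqxx /=; apply: eq_card => u.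
    by rewrite !inE dotC.
  have := card_dot0 x k1; rewrite (cardD1 0) !inE dot0l eqxx add1n /=.
  by rewrite -natr1 => /eqP; rewrite addr_eq0 => /eqP ->; rewrite mulrN1.
by rewrite sumrN => /eqP; rewrite oppr_eq0 => /eqP.
Qed.

End V3.


Section V4.
Variable F : finFieldType.
Variable p : nat.
Hypothesis pcharF : p \in [pchar F].

Lemma insv00 k i : insv i (0 : 'rV[F]_k) 0 = 0.
Proof. by apply/rowP => j; rewrite !mxE; case: unliftP => [j'|] _; rewrite ?mxE. Qed.

Lemma dot0r k (y : 'rV[F]_k) : dot y 0 = 0.
Proof. by rewrite dotC dot0l. Qed.

Definition emb k (i : 'I_k.+1) (f : 'rV[F]_k -> 'F_p) (x : 'rV[F]_k.+1) : 'F_p :=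
  if x 0 i == 0 then f (dropv i x) else 0.

Lemma emb_inv k i (f : 'rV[F]_k -> 'F_p) : Inv f -> Inv (emb i f).
Proof.
move=> [fZ f0]; split => [a x anz|]; rewrite /emb.
  by rewrite mxE mulf_eq0 (negbTE anz) /= dropvZ fZ.
by rewrite mxE eqxx; rewrite (_ : dropv i 0 = 0) //; apply/rowP => j; rewrite !mxE.
Qed.

Lemma emb_Dv k i (f : 'rV[F]_k -> 'F_p) : (1 < k)%N -> Inv f -> Dv f -> Dv (emb i f).
Proof.
move=> k1 If Df u unz.
rewrite big_mkcond (sum_ins i) /= (bigD1 0) //= [X in _ + X]big1 ?addr0; last first.
  move=> c cnz; apply: big1 => y _; rewrite /emb insv_i (negbTE cnz).
  by case: ifP.
rewrite -(ins_drop i u) /emb.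
under eq_bigr => y _ do rewrite dot_ins mul0r add0r insv_i eqxx drop_ins.
rewrite -big_mkcond /=.
have [-> | nz] := eqVneq (dropv i u) 0; last exact: Df.
under eq_bigl => y do rewrite dot0r eqxx.
exact: sum_all.
Qed.

Lemma emb_supp k i (f : 'rV[F]_k -> 'F_p) : #|supp (emb i f)| = #|supp f|.
Proof.
have -> : supp (emb i f) = (fun y => insv i y 0) @: supp f.
  apply/setP => x; rewrite !inE /emb; apply/idP/imsetP.
    case: ifP => [/eqP xi fx|]; last by rewrite eqxx.
    by exists (dropv i x); rewrite ?inE // -xi ins_drop.
  by move=> [y]; rewrite inE => fy ->; rewrite insv_i eqxx drop_ins.
by apply: card_imset => y y' /(congr1 (dropv i)); rewrite !drop_ins.
Qed.

Definition prj k (r : 'rV[F]_k.+1) (i : 'I_k.+1) (g : 'rV[F]_k.+1 -> 'F_p) (y : 'rV[F]_k) : 'F_p :=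
  \sum_(t : F) g (insv i y 0 + t *: r).

Lemma prj_inv k (r : 'rV[F]_k.+1) (i : 'I_k.+1) (g : 'rV[F]_k.+1 -> 'F_p) : Inv g -> g r = 0 -> Inv (prj r i g).
Proof.
move=> [gZ g0] gr; split => [a y anz|]; rewrite /prj.
  rewrite [RHS](reindex_inj (h := fun t => t / a)) /=; last first.
    by apply: mulIf; rewrite invr_eq0.
  apply: eq_bigr => t _.
  by rewrite -[RHS](gZ a _ anz) scalerDr insvZ mulr0 scalerA mulrC divfK.
rewrite insv00 big1 // => t _; rewrite add0r.
have [-> | tnz] := eqVneq t 0; first by rewrite scale0r.
by rewrite gZ.
Qed.


Lemma dropv0 k i : dropv i (0 : 'rV[F]_k.+1) = 0.
Proof. by apply/rowP => j; rewrite !mxE. Qed.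

Lemma prj_Dv k (r : 'rV[F]_k.+1) (i : 'I_k.+1) (g : 'rV[F]_k.+1 -> 'F_p) : r 0 i != 0 -> Dv g -> Dv (prj r i g).
Proof.
move=> ri Dg u' unz.
set c0 := - dot (dropv i r) u' / r 0 i.
set u := insv i u' c0.
have unz' : u != 0.
  by apply: contraNneq unz => h; rewrite -(drop_ins i u' c0) -/u h dropv0.
have ru : dot r u = 0.
  by rewrite (dot_split i) /u insv_i drop_ins /c0 mulrC divfK // addNr.
rewrite /prj.
transitivity (\sum_y \sum_t (if dot (insv i y 0 + t *: r) u == 0
    then g (insv i y 0 + t *: r) else 0)).
  rewrite big_mkcond; apply: eq_bigr => y _.
  have e : forall t, dot (insv i y 0 + t *: r) u = dot y u'.
    by move=> t; rewrite dotDl dotZl ru mulr0 addr0 /u dot_ins mul0r add0r.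
  under [RHS]eq_bigr => t _ do rewrite e.
  by case: ifP => _ //; rewrite big1.
rewrite exchange_big /=.
set H := fun x => if dot x u == 0 then g x else 0.
transitivity (\sum_t \sum_y H (insv i y (t * r 0 i))).
  apply: eq_bigr => t _.
  rewrite [RHS](reindex_inj (addIr (t *: dropv i r))) /=.
  apply: eq_bigr => y _.
  have -> : t *: r = insv i (t *: dropv i r) (t * r 0 i) by rewrite -insvZ ins_drop.
  by rewrite insvD add0r.
transitivity (\sum_c \sum_y H (insv i y c)).
  by rewrite [RHS](reindex_inj (mulIf ri)).
by rewrite -sum_ins -big_mkcond; exact: Dg.
Qed.

Lemma insv_coord k i (y : 'rV[F]_k) t (r : 'rV[F]_k.+1) :
  (insv i y 0 + t *: r) 0 i = t * r 0 i.
Proof. by rewrite !mxE unlift_none add0r. Qed.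

Lemma prj_supp k (r : 'rV[F]_k.+1) (i : 'I_k.+1) (g : 'rV[F]_k.+1 -> 'F_p) : r 0 i != 0 ->
  (#|supp (prj r i g)| <= #|supp g|)%N.
Proof.
move=> ri.
have L := leq_imset_card (fun x : 'rV[F]_k.+1 => dropv i (x - (x 0 i / r 0 i) *: r)) (supp g). apply: (leq_trans _ L).
apply: subset_leq_card; apply/subsetP => y; rewrite inE => fy.
have [t gt] : exists t, g (insv i y 0 + t *: r) != 0.
  apply/existsP; apply: contraR fy; rewrite negb_exists => /forallP h.
  by apply/eqP; apply: big1 => t _; apply/eqP; move: (h t); rewrite negbK.
apply/imsetP; exists (insv i y 0 + t *: r); first by rewrite inE.
by rewrite insv_coord mulfK // addrK drop_ins.
Qed.

Lemma prj_nz k (r : 'rV[F]_k.+1) (i : 'I_k.+1) (g : 'rV[F]_k.+1 -> 'F_p) a : r 0 i != 0 -> Inv g -> g a != 0 ->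
  (forall c, g (r + c *: a) = 0) ->
  prj r i g (dropv i (a - (a 0 i / r 0 i) *: r)) != 0.
Proof.
move=> ri [gZ _] ga hr.
set s := a 0 i / r 0 i.
have z : insv i (dropv i (a - s *: r)) 0 = a - s *: r.
  rewrite -[RHS](ins_drop i (a - s *: r)); congr (insv _ _ _).
  by rewrite !mxE /s divfK // subrr.
rewrite /prj z (bigD1 s) //= big1 ?addr0; first by rewrite subrK.
move=> t ts.
have tsz : t - s != 0 by rewrite subr_eq0.
rewrite (_ : a - s *: r + t *: r = (t - s) *: (r + (t - s)^-1 *: a)).
  by rewrite gZ.
rewrite scalerDr scalerA mulfV // scale1r scalerBl.
by rewrite [LHS]addrC [LHS]addrCA [LHS]addrC.
Qed.

Lemma exists_r k (g : 'rV[F]_k -> 'F_p) a : g a != 0 ->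
  (#|supp g| * #|F| < #|{: 'rV[F]_k}|)%N ->
  exists r, forall c, g (r + c *: a) = 0.
Proof.
move=> ga lt.
set B := [set sc.1 - sc.2 *: a | sc in setX (supp g) [set: F]].
have ltB : (#|B| < #|{: 'rV[F]_k}|)%N.
  by apply: leq_ltn_trans (leq_imset_card _ _) _; rewrite cardsX cardsT.
have [r rB] : exists r, r \notin B.
  apply/existsP; apply: contraTT ltB; rewrite negb_exists => /forallP h.
  rewrite -leqNgt -cardsT; apply: subset_leq_card; apply/subsetP => x _.
  by move: (h x); rewrite negbK.
exists r => c; apply/eqP; apply: contraNT rB => gn; apply/imsetP.
by exists (r + c *: a, c); rewrite ?in_setX ?inE ?gn //= addrK.
Qed.

End V4.


Section W.
Variable F : finFieldType.
Variable p : nat.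
Hypothesis pcharF : p \in [pchar F].
Variable m : nat.

Definition ptS (x : 'rV[F]_m.+1) : {set 'rV[F]_m.+1} := [set a *: x | a : F].

Definition vlift (v : word F m p) (x : 'rV[F]_m.+1) : 'F_p :=
  \sum_(P : PGpoint F m | val P == ptS x) v P.

Lemma mem_ptS x : x \in ptS x.
Proof. by apply/imsetP; exists 1; rewrite ?scale1r. Qed.

Lemma ptSZ a x : a != 0 -> ptS (a *: x) = ptS x.
Proof.
move=> anz; apply/setP => y; apply/imsetP/imsetP => [[b _ ->]|[b _ ->]].
  by exists (b * a); rewrite ?scalerA.
by exists (b / a); rewrite // scalerA divfK.
Qed.

Lemma ptS_point x : x != 0 -> is_point (ptS x).
Proof. by move=> xnz; apply/existsP; exists x; rewrite xnz eqxx. Qed.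

Lemma ptS0 : ptS 0 = [set 0].
Proof.
apply/setP => y; rewrite inE; apply/imsetP/eqP => [[b _ ->]|->]; first by rewrite scaler0.
by exists 0; rewrite ?scaler0.
Qed.

Lemma point_rep (P : PGpoint F m) : exists2 v, v != 0 & val P = ptS v.
Proof. by case/existsP: (valP P) => v /andP [vnz /eqP e]; exists v. Qed.

Lemma ptS_ne0 v : v != 0 -> ptS v != ptS 0.
Proof.
move=> vnz; apply/negP => /eqP e.
by move: (mem_ptS v); rewrite e ptS0 inE (negbTE vnz).
Qed.

Lemma ptS_eq v y : v != 0 -> ptS y = ptS v -> exists2 a, a != 0 & y = a *: v.
Proof.
move=> vnz e.
have : y \in ptS v by rewrite -e mem_ptS.
case/imsetP => a _ ya; exists a => //.
apply: contraNneq (ptS_ne0 vnz) => a0.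
by rewrite -e ya a0 scale0r.
Qed.

Lemma card_ptS v : v != 0 -> #|ptS v| = #|F|.
Proof.
move=> vnz; rewrite card_imset // => a b e.
have : (a - b) *: v == 0 by rewrite scalerBl e subrr.
by rewrite scaler_eq0 (negbTE vnz) orbF subr_eq0 => /eqP.
Qed.

Lemma card_fiber (P : PGpoint F m) : #|[set y | val P == ptS y]| = #|F|.-1.
Proof.
have [v vnz e] := point_rep P.
have -> : [set y | val P == ptS y] = ptS v :\ 0.
  apply/setP => y; rewrite !inE e; apply/eqP/andP => [h|[ynz yv]].
    have [a anz ->] := ptS_eq vnz (esym h).
    by rewrite scaler_eq0 negb_or anz vnz; split => //; apply/imsetP; exists a.
  case/imsetP: yv => a _ ya; rewrite ya ptSZ //.
  by apply: contraNneq ynz => a0; rewrite ya a0 scale0r.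
have h0 : 0 \in ptS v by apply/imsetP; exists 0; rewrite ?scale0r.
by rewrite -(card_ptS vnz) (cardsD1 0 (ptS v)) h0.
Qed.

Lemma sum_lift (R : nmodType) (h : PGpoint F m -> R) :
  \sum_(x : 'rV[F]_m.+1) \sum_(P | val P == ptS x) h P = (\sum_P h P) *+ #|F|.-1.
Proof.
rewrite (exchange_big_dep xpredT) //= -sumrMnl.
apply: eq_bigr => P _; rewrite sumr_const; congr (_ *+ _).
by rewrite -(card_fiber P); apply: eq_card => y; rewrite !inE.
Qed.

Lemma cardFm1 : ((#|F|.-1)%:R : 'F_p) = -1.
Proof.
have := cardF0 pcharF.
rewrite -(prednK (ltnW (cardF_gt1 F))) -natr1 => /eqP; rewrite addr_eq0 => /eqP.
by [].
Qed.

Lemma sum_points (h : PGpoint F m -> 'F_p) :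
  \sum_P h P = - \sum_(x : 'rV[F]_m.+1) \sum_(P | val P == ptS x) h P.
Proof. by rewrite sum_lift -mulr_natr cardFm1 mulrN1 opprK. Qed.


Lemma lift_pt (v : word F m p) (P : PGpoint F m) x : val P = ptS x -> vlift v x = v P.
Proof.
move=> e; rewrite /vlift (big_pred1 P) // => Q.
by rewrite -e (inj_eq val_inj).
Qed.

Lemma lift0 (v : word F m p) : vlift v 0 = 0.
Proof.
rewrite /vlift big_pred0 // => P.
have [w wnz ->] := point_rep P.
exact: negbTE (ptS_ne0 wnz).
Qed.

Lemma exists_pt (x : 'rV[F]_m.+1) : x != 0 -> exists P : PGpoint F m, val P = ptS x.
Proof. by move=> xnz; exists (Sub (ptS x) (ptS_point xnz)); rewrite SubK. Qed.

Lemma lift_inv (v : word F m p) : Inv (vlift v).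
Proof. by split => [a x anz|]; rewrite ?lift0 // /vlift ptSZ. Qed.

Lemma subset_ker (x u : 'rV[F]_m.+1) :
  (ptS x \subset [set y | y *m u^T == 0]) = (dot x u == 0).
Proof.
apply/subsetP/idP => [h|h y].
  by have := h x (mem_ptS x); rewrite inE mxdot.
by case/imsetP => a _ ->; rewrite inE mxdot dotZl (eqP h) mulr0.
Qed.

Lemma hyper_dot (v : word F m p) (H : PGhyperplane F m) (u : 'rV[F]_m.+1) :
  val H = [set x | x *m u^T == 0] ->
  dotw v (incvec p H) = - \sum_(x | dot x u == 0) vlift v x.
Proof.
move=> eH; rewrite /dotw sum_points; congr (- _); rewrite [RHS]big_mkcond /=.
apply: eq_bigr => x _.
rewrite /vlift.
transitivity (\sum_(P | val P == ptS x) (if dot x u == 0 then v P else 0)).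
  apply: eq_bigr => P /eqP eP; rewrite /incvec ffunE (_ : val P = ptS x) // eH subset_ker.
  by case: ifP; rewrite ?mulr1 ?mulr0.
by case: ifP => _ //; rewrite big1.
Qed.

Lemma dual_char (v : word F m p) : (v \in PGdual F m p) <-> Dv (vlift v).
Proof.
split.
  rewrite inE => /forall_inP h u unz.
  have hp : is_hyperplane [set x : 'rV[F]_m.+1 | x *m u^T == 0].
    by apply/existsP; exists u; rewrite unz eqxx.
  pose H : PGhyperplane F m := Sub _ hp.
  have inc : incvec p H \in PGcode F m p.
    rewrite inE; apply/existsP; exists [ffun H' => (H' == H)%:R].
    apply/eqP/ffunP => P; rewrite /incvec !ffunE (bigD1 H) //= !ffunE eqxx mul1r.
    rewrite big1 ?addr0 // => H' nH; by rewrite ffunE (negbTE nH) mul0r.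
  have eH : val H = [set x | x *m u^T == 0] by rewrite SubK.
  have := h _ inc; rewrite (hyper_dot _ eH) oppr_eq0 => /eqP.
  by [].
move=> D; rewrite inE; apply/forall_inP => c; rewrite inE => /existsP [a /eqP ->].
rewrite /dotw.
under eq_bigr => P _ do rewrite ffunE mulr_sumr.
rewrite exchange_big /=; apply/eqP; apply: big1 => H _.
have [u /andP [unz /eqP eH]] := existsP (valP H).
transitivity (a H * dotw v (incvec p H)).
  by rewrite /dotw mulr_sumr; apply: eq_bigr => P _; rewrite mulrCA.
by rewrite (hyper_dot _ eH) D // oppr0 mulr0.
Qed.

Lemma no_pt0 (P : PGpoint F m) : (val P == ptS 0) = false.
Proof. by have [w wnz ->] := point_rep P; exact: negbTE (ptS_ne0 wnz). Qed.

Lemma wt_lift (v : word F m p) : (wt v * #|F|.-1)%N = #|supp (vlift v)|.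
Proof.
have e1 : wt v = \sum_P (v P != 0 : nat).
  rewrite /wt -sum1_card big_mkcond /=; apply: eq_bigr => P _; rewrite inE.
  by case: (v P != 0).
have e2 : #|supp (vlift v)| = \sum_x (vlift v x != 0 : nat).
  rewrite /supp -sum1_card big_mkcond /=; apply: eq_bigr => x _; rewrite inE.
  by case: (vlift v x != 0).
rewrite e1 e2.
have := sum_lift (fun P => (v P != 0 : nat)).
have nm : forall a n : nat, (a *+ n)%R = (a * n)%N.
  by move=> a; elim=> [|n IH]; rewrite ?muln0 // mulrS mulnS IH.
rewrite nm => <-.
apply: eq_bigr => x _.
have [-> | xnz] := eqVneq x 0.
  by rewrite lift0 eqxx big_pred0 // => P; rewrite no_pt0.
have [P eP] := exists_pt xnz.
rewrite (lift_pt _ eP) (big_pred1 P) // => Q.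
by rewrite -eP (inj_eq val_inj).
Qed.

Lemma wt_gt0 (v : word F m p) : (0 < wt v)%N = (v != 0).
Proof.
rewrite /wt card_gt0; apply/set0Pn/idP => [[P]|vnz]; rewrite ?inE.
  by move=> h; apply: contraNneq h => ->; rewrite ffunE.
have [P hP] : exists P, v P != 0.
  apply/existsP; apply: contraNT vnz; rewrite negb_exists => /forallP h.
  by apply/eqP/ffunP => P; rewrite ffunE; apply/eqP; move: (h P); rewrite negbK.
by exists P; rewrite inE.
Qed.

Lemma mkword (g : 'rV[F]_m.+1 -> 'F_p) : Inv g -> exists v : word F m p, vlift v =1 g.
Proof.
move=> [gZ g0].
exists [ffun P : PGpoint F m => g (xchoose (existsP (valP P)))] => x.
have [-> | xnz] := eqVneq x 0; first by rewrite lift0 g0.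
have [P eP] := exists_pt xnz.
rewrite (lift_pt _ eP) ffunE.
case/andP: (xchooseP (existsP (valP P))).
set w := xchoose _ => wnz /eqP ew.
have e : ptS w = ptS x by rewrite -eP ew.
have [a anz ->] := ptS_eq xnz e.
by rewrite gZ.
Qed.

End W.


Section Final.
Variable F : finFieldType.
Variable p : nat.
Hypothesis pcharF : p \in [pchar F].

Lemma qm1_gt0 : (0 < #|F|.-1)%N.
Proof. by rewrite -ltnS prednK ?(ltnW (cardF_gt1 F)) // cardF_gt1. Qed.

Lemma nz_of_lift m (v : word F m p) x : vlift v x != 0 -> v != 0.
Proof.
apply: contraNneq => ->; rewrite /vlift big1 // => P _; by rewrite ffunE.
Qed.

Lemma embed_word m (c : word F m p) : (2 <= m)%N -> c \in PGdual F m p -> c != 0 ->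
  exists c' : word F m.+1 p, [/\ c' \in PGdual F m.+1 p, c' != 0 & wt c' = wt c].
Proof.
move=> m2 cd cnz.
have Dc := (dual_char pcharF c).1 cd.
have Ig := emb_inv ord_max (lift_inv c).
have Dg := emb_Dv pcharF ord_max (ltnW m2 : (1 < m.+1)%N) (lift_inv c) Dc.
have [c' e] := mkword Ig.
have we : wt c' = wt c.
  apply/eqP; rewrite -(eqn_pmul2r qm1_gt0) !wt_lift.
  rewrite -(emb_supp ord_max (vlift c)); apply/eqP/eq_card => x.
  by rewrite !inE e.
exists c'; split => //; last by rewrite -wt_gt0 we wt_gt0.
apply/(dual_char pcharF c').2 => u unz.
by rewrite (eq_bigr _ (fun x _ => e x)); exact: Dg.
Qed.


Lemma proj_word m (c : word F m.+1 p) : c \in PGdual F m.+1 p -> c != 0 ->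
  (wt c * #|F|.-1 < #|{: 'rV[F]_m.+1}|)%N ->
  exists c' : word F m p, [/\ c' \in PGdual F m p, c' != 0 & (wt c' <= wt c)%N].
Proof.
move=> cd cnz bnd.
have Dg := (dual_char pcharF c).1 cd.
have Ig := lift_inv c.
set g := vlift c in Dg Ig.
have [a ga] : exists a, g a != 0.
  have : (0 < #|supp g|)%N.
    by rewrite -wt_lift muln_gt0 wt_gt0 cnz qm1_gt0.
  by rewrite card_gt0 => /set0Pn [a]; rewrite inE => h; exists a.
have cond : (#|supp g| * #|F| < #|{: 'rV[F]_m.+2}|)%N.
  rewrite -wt_lift.
  have -> : #|{: 'rV[F]_m.+2}| = (#|{: 'rV[F]_m.+1}| * #|F|)%N.
    by rewrite !card_mx !mul1n expnS mulnC.
  by rewrite ltn_pmul2r // (ltnW (cardF_gt1 F)).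
have [r hr] := exists_r ga cond.
have gr : g r = 0 by have := hr 0; rewrite scale0r addr0.
have rnz : r != 0.
  by apply: contraNneq ga => r0; have := hr 1; rewrite r0 add0r scale1r => ->.
have [i ri] : exists i, r 0 i != 0.
  apply/existsP; apply: contraR rnz; rewrite negb_exists => /forallP h.
  by apply/eqP/rowP => j; rewrite mxE; apply/eqP; move: (h j); rewrite negbK.
have If := prj_inv i Ig gr.
have Df := prj_Dv ri Dg.
have nz := prj_nz ri Ig ga hr.
have [c' e] := mkword If.
exists c'; split.
- apply/(dual_char pcharF c').2 => u unz.
  by rewrite (eq_bigr _ (fun x _ => e x)); exact: Df.
- by apply: (@nz_of_lift _ c' (dropv i (a - (a 0 i / r 0 i) *: r))); rewrite e.
rewrite -(leq_pmul2r qm1_gt0) !wt_lift.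
apply: leq_trans (prj_supp g ri).
by rewrite leq_eqVlt; apply/orP; left; apply/eqP/eq_card => x; rewrite !inE e.
Qed.


Lemma bigmin_leF (I : finType) (P : pred I) (G : I -> nat) x0 j :
  P j -> (\big[minn/x0]_(i | P i) G i <= G j)%N.
Proof.
move=> Pj; elim: (index_enum I) (mem_index_enum j) => // a r IH.
rewrite in_cons big_cons => /orP [/eqP <-|jr]; first by rewrite Pj geq_minl.
case: (P a); last exact: IH.
exact: leq_trans (geq_minr _ _) (IH jr).
Qed.

Lemma mind_le m (S : {set word F m p}) c : c \in S -> c != 0 -> (mindist S <= wt c)%N.
Proof.
by move=> cS cnz; rewrite /mindist; apply: bigmin_leF; rewrite cS cnz.
Qed.

Lemma mind_attain m (S : {set word F m p}) :
  (exists c, (c \in S) && (c != 0)) ->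
  exists c, [/\ c \in S, c != 0 & mindist S = wt c].
Proof.
case=> c0 Pc0.
case: (@arg_minnP _ c0 (fun c => (c \in S) && (c != 0)) (@wt F m p) Pc0) => c /andP [cS cnz] cmin.
exists c; split => //; apply/eqP; rewrite eqn_leq mind_le //=.
rewrite /mindist; apply: (big_ind (fun x => wt c <= x)%N).
- by apply: leqW; rewrite /wt max_card.
- by move=> x y hx hy; rewrite leq_min hx hy.
- by move=> d Pd; apply: cmin.
Qed.

Lemma step m : (2 <= m)%N -> (exists c, (c \in PGdual F m p) && (c != 0)) ->
  mindist (PGdual F m.+1 p) = mindist (PGdual F m p) /\
  exists c, (c \in PGdual F m.+1 p) && (c != 0).
Proof.
move=> m2 ex.
have [c [cS cnz ce]] := mind_attain ex.
have [c1 [c1S c1nz c1w]] := embed_word m2 cS cnz.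
have ex1 : exists c, (c \in PGdual F m.+1 p) && (c != 0) by exists c1; rewrite c1S c1nz.
have [g [gS gnz ge]] := mind_attain ex1.
have le1 : (mindist (PGdual F m.+1 p) <= mindist (PGdual F m p))%N.
  by rewrite ce -c1w; exact: mind_le.
have bnd : (wt g * #|F|.-1 < #|{: 'rV[F]_m.+1}|)%N.
  apply: (@leq_ltn_trans (wt c * #|F|.-1)).
    by rewrite leq_pmul2r ?qm1_gt0 // -ge -ce.
  rewrite wt_lift.
  have sub : supp (vlift c) \subset [set~ 0].
    by apply/subsetP => x; rewrite !inE; apply: contraNneq => ->; rewrite lift0.
  apply: (leq_ltn_trans (subset_leq_card sub)); rewrite cardsC1.
  by rewrite prednK //; apply/card_gt0P; exists 0.
have [g' [g'S g'nz g'w]] := proj_word gS gnz bnd.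
split => //; apply/eqP; rewrite eqn_leq le1 /= ge.
exact: leq_trans (mind_le g'S g'nz) g'w.
Qed.

End Final.


Section Base.
Variable F : finFieldType.
Variable p : nat.
Hypothesis pcharF : p \in [pchar F].

Lemma dot_delta k (x : 'rV[F]_k) j : dot x (delta_mx 0 j) = x 0 j.
Proof.
rewrite /dot (bigD1 j) //= mxE !eqxx /= mulr1 big1 ?addr0 // => l lj.
by rewrite mxE (negbTE lj) mulr0.
Qed.

Lemma cnt k (P Q : pred 'rV[F]_k) :
  \sum_(x | P x) ((Q x)%:R : 'F_p) = (#|[set x | P x && Q x]|)%:R.
Proof.
rewrite (eq_bigr (fun x => if Q x then 1 else 0)) => [|x _]; last by case: (Q x).
rewrite -big_mkcondr sumr_const; congr (_ *+ _).
by apply: eq_card => x; rewrite !inE.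
Qed.

Lemma card_two (u : 'rV[F]_3) j :
  ((#|[set x : 'rV[F]_3 | (dot x u == 0) && (x 0 j == 0)]|)%:R : 'F_p) = 0.
Proof.
rewrite -(@ker_card F p pcharF 3 (1 + 1) (row_mx u^T (delta_mx 0 j)^T)) //.
congr (_%:R); apply: eq_card => x; rewrite !inE mul_mx_row row_mx_eq0 !mxdot.
by rewrite dot_delta.
Qed.

Definition g0 (x : 'rV[F]_3) : 'F_p := (x 0 ord0 == 0)%:R - (x 0 ord_max == 0)%:R.

Lemma g0_inv : Inv g0.
Proof.
split => [a x anz|]; last by rewrite /g0 !mxE eqxx subrr.
by rewrite /g0 !mxE !mulf_eq0 (negbTE anz).
Qed.

Lemma g0_Dv : Dv g0.
Proof.
move=> u unz; rewrite /g0 sumrB !cnt.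
by rewrite (card_two u ord0) (card_two u ord_max) subrr.
Qed.

Lemma base : exists c, (c \in PGdual F 2 p) && (c != 0).
Proof.
have [c e] := mkword g0_inv.
exists c; apply/andP; split.
  apply/(dual_char pcharF c).2 => u unz.
  by rewrite (eq_bigr _ (fun x _ => e x)); exact: g0_Dv.
apply: (@nz_of_lift F p 2 c (delta_mx 0 ord_max)); rewrite e /g0 !mxE /=.
by rewrite eqxx oner_eq0 subr0 oner_eq0.
Qed.

End Base.

Theorem mainTheorem14 (F : finFieldType) (p n : nat) :
  p \in [pchar F]%R -> (3 <= n)%N ->
  mindist (PGdual F n p) = mindist (PGdual F 2 p).
Proof.
move=> pc n3.
have H : forall k, mindist (PGdual F k.+2 p) = mindist (PGdual F 2 p) /\
    exists c, (c \in PGdual F k.+2 p) && (c != 0).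
  elim=> [|k [IH ex]]; first by split => //; exact: base.
  have [e ex'] := step pc (isT : (2 <= k.+2)%N) ex.
  by split => //; rewrite e.
have -> : n = (n - 2).+2 by rewrite -addn2 subnK // ltnW.
exact: (H _).1.
Qed.
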